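(* For $i=1,2$ let $\lambda_i\in\mathbb{C}^*$, $\alpha_i\in\mathbb{C}\setminus\{0\}$, and $h_i=\xi_it+\eta_i\in\mathbb{C}[t]$ with $\xi_i\ne0$. Then $\Omega(\lambda_1,\alpha_1,h_1)\cong\Omega(\lambda_2,\alpha_2,h_2)$ as $\mathrm{Vir}$-modules if and only if $\lambda_1=\lambda_2$ and $\alpha_1\xi_1=\alpha_2\xi_2$; and in that case the isomorphisms are exactly the nonzero scalar multiples of the linear map $\phi$ with $\phi(s^ih_1^n)=s^ig_n(h_2)$ for all $n,i\in\mathbb{Z}_+$, where $g_n(x)=\sum_{i=0}^n\binom{n}{i}b_{n-i}x^i$ and $b_0=1$, $b_1=0$, $b_{i+1}=ib_i+i(\eta_2-\eta_1)b_{i-1}$ for $i\in\mathbb{N}$.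
   Context: $\mathrm{Vir}$ is the Lie algebra with basis $\{d_i,c\mid i\in\mathbb{Z}\}$ and brackets $[d_i,d_j]=(j-i)d_{i+j}+\delta_{i,-j}\frac{i^3-i}{12}c$, $[c,d_i]=0$. For $\lambda\in\mathbb{C}^*$, $\alpha\in\mathbb{C}$, $h\in\mathbb{C}[t]$, define operators on $\mathbb{C}[t]$ by $F(f)=\frac{h(t)-h(\alpha)}{t-\alpha}f(t)-f'(t)$ and $G(f)=h(\alpha)f+tF(f)$. The $\mathrm{Vir}$-module $\Omega(\lambda,\alpha,h)$ is the vector space $\mathbb{C}[t,s]$ with $c$ acting as $0$ and $d_m(f(t)s^i)=\lambda^m(s-m)^i\big(sf+mG(f)-m^2\alpha F(f)\big)$ for $m\in\mathbb{Z}$, $i\in\mathbb{Z}_+$, $f\in\mathbb{C}[t]$. *)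

(* Defs.v *)
(* Complex numbers are modelled as R[i] (mathcomp-real-closed
   `complex`) over an arbitrary R : realType (every realType is the real line). *)
From HB Require Import structures.
From mathcomp Require Import all_boot all_order all_algebra.
From mathcomp Require Import reals complex.
Set Implicit Arguments. Unset Strict Implicit. Unset Printing Implicit Defensive.
Import Order.TTheory GRing.Theory Num.Theory.
Local Open Scope ring_scope.

Section Omega.
Variable R : realType.
Local Notation C := (R[i]).
(* C[t,s] is represented as {poly {poly C}}: outer variable s, coefficients in C[t]. *)
Local Notation V := {poly {poly C}}.

(* F(f) = (h(t)-h(alpha))/(t-alpha) f(t) - f'(t)  (the division is exact) *)
Definition Fop (alpha : C) (h f : {poly C}) : {poly C} :=
  ((h - (h.[alpha])%:P) %/ ('X - alpha%:P)) * f - f^`().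

Definition Gop (alpha : C) (h f : {poly C}) : {poly C} :=
  h.[alpha] *: f + 'X * Fop alpha h f.

(* action of d_m on Omega(lambda, alpha, h), extended linearly from
   d_m (f(t) s^i) = lambda^m (s-m)^i (s f + m G(f) - m^2 alpha F(f)) *)
Definition dact (lambda alpha : C) (h : {poly C}) (m : int) (v : V) : V :=
  \sum_(i < size v)
    ((lambda ^ m)%:P%:P *
     (('X - ((m%:~R : C)%:P)%:P) ^+ i *
      ('X * (v`_i)%:P + ((m%:~R : C) *: Gop alpha h v`_i)%:P
       - (((m ^+ 2)%:~R * alpha) *: Fop alpha h v`_i)%:P))).

Definition Clinear (phi : V -> V) : Prop :=
  forall (a : C) (v w : V), phi (a%:P%:P * v + w) = a%:P%:P * phi v + phi w.

(* Vir-module isomorphism Omega(l1,a1,h1) -> Omega(l2,a2,h2): a bijective linear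
   map commuting with every d_m (c acts as 0 on both modules). *)
Definition Vir_iso (l1 a1 : C) (h1 : {poly C}) (l2 a2 : C) (h2 : {poly C})
  (phi : V -> V) : Prop :=
  [/\ Clinear phi, bijective phi &
      forall (m : int) (v : V), phi (dact l1 a1 h1 m v) = dact l2 a2 h2 m (phi v)].

Definition Omega_isomorphic (l1 a1 : C) (h1 : {poly C}) (l2 a2 : C) (h2 : {poly C}) :=
  exists phi : V -> V, Vir_iso l1 a1 h1 l2 a2 h2 phi.

Fixpoint bseq (d : C) (n : nat) : C :=
  match n with
  | 0 => 1
  | 1 => 0
  | S ((S i) as k) => (k%:R * bseq d k + k%:R * d * bseq d i)
  end.

Definition gpoly (d : C) (n : nat) : {poly C} :=
  \sum_(i < n.+1) (('C(n, i))%:R * bseq d (n - i)) *: 'X^i.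

Definition phi_spec (d : C) (h1 h2 : {poly C}) (phi : V -> V) : Prop :=
  forall n i : nat, phi ('X^i * (h1 ^+ n)%:P) = 'X^i * ((gpoly d n) \Po h2)%:P.

End Omega.

(* Main.v *)
Require Import Defs.
From HB Require Import structures.
From mathcomp Require Import all_boot all_order all_algebra.
From mathcomp Require Import reals complex.
Import Order.TTheory GRing.Theory Num.Theory.
Local Open Scope ring_scope.


From mathcomp Require Import ring zify.
Set Implicit Arguments. Unset Strict Implicit. Unset Printing Implicit Defensive.

Section Work.
Variable R : realType.
Local Notation C := (R[i]).
Local Notation V := {poly {poly C}}.

Definition PP (c : C) : V := c%:P%:P.

Lemma Fop_lin (a xi eta : C) (f : {poly C}) :
  Fop a (xi *: 'X + eta%:P) f = xi *: f - f^`().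
Proof.
rewrite /Fop; congr (_ - _).
have -> : xi *: 'X + eta%:P - ((xi *: 'X + eta%:P).[a])%:P = xi%:P * ('X - a%:P).
  rewrite !hornerE -mul_polyC; ring.
by rewrite mulpK ?polyXsubC_eq0 // mul_polyC.
Qed.

Lemma Gop_lin (a xi eta : C) (f : {poly C}) :
  Gop a (xi *: 'X + eta%:P) f = (xi * a + eta) *: f + 'X * (xi *: f - f^`()).
Proof. by rewrite /Gop Fop_lin !hornerE. Qed.

Lemma Fop_lin_op (a : C) h (c : C) f g : Fop a h (c *: f + g) = c *: Fop a h f + Fop a h g.
Proof.
rewrite /Fop derivD derivZ -!mul_polyC; ring.
Qed.

Lemma Gop_lin_op (a : C) h (c : C) f g : Gop a h (c *: f + g) = c *: Gop a h f + Gop a h g.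
Proof.
rewrite /Gop Fop_lin_op -!mul_polyC; ring.
Qed.

Lemma Fop0 (a : C) h : Fop a h 0 = 0.
Proof. by rewrite /Fop deriv0 mulr0 subr0. Qed.
Lemma Gop0 (a : C) h : Gop a h 0 = 0.
Proof. by rewrite /Gop Fop0 mulr0 scaler0 addr0. Qed.

Definition term (l a : C) (h : {poly C}) (m : int) (i : nat) (f : {poly C}) : V :=
    ((l ^ m)%:P%:P *
     (('X - ((m%:~R : C)%:P)%:P) ^+ i *
      ('X * f%:P + ((m%:~R : C) *: Gop a h f)%:P
       - (((m ^+ 2)%:~R * a) *: Fop a h f)%:P))).

Lemma term0 (l a : C) h m i : term l a h m i 0 = 0.
Proof.
rewrite /term Fop0 Gop0 !scaler0.
have -> : ('X * 0%:P + 0%:P - 0%:P : V) = 0.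
  by rewrite polyC0 mulr0 addr0 subrr.
by rewrite !mulr0.
Qed.

Lemma term_lin (l a : C) h m i (c : C) f g :
  term l a h m i (c *: f + g) = PP c * term l a h m i f + term l a h m i g.
Proof.
rewrite /term /PP Fop_lin_op Gop_lin_op -!mul_polyC.
rewrite !(rmorphD, rmorphM) /=; ring.
Qed.

Lemma dact_widen (l a : C) h m (v : V) N : (size v <= N)%N ->
  dact l a h m v = \sum_(i < N) term l a h m i v`_i.
Proof.
move=> HN; rewrite /dact (big_ord_widen N (fun i => term l a h m i v`_i)) //.
rewrite big_mkcond /=; apply: eq_bigr => i _; case: ifP => // /negbT.
by rewrite -leqNgt => Hi; rewrite nth_default // term0.
Qed.

End Work.

From mathcomp Require Import ring zify.
Set Implicit Arguments. Unset Strict Implicit. Unset Printing Implicit Defensive.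

Section Work2.
Variable R : realType.
Local Notation C := (R[i]).
Local Notation V := {poly {poly C}}.

Lemma PPM (a b : C) : PP (a * b) = PP a * PP b.
Proof. by rewrite /PP !rmorphM. Qed.

Lemma PP_eq0 (c : C) : (PP c == 0) = (c == 0).
Proof. by rewrite /PP !polyC_eq0. Qed.

Lemma cPP (c : C) (f : {poly C}) : ((c *: f)%:P : V) = PP c * f%:P.
Proof. by rewrite -mul_polyC rmorphM. Qed.

Lemma dact_lin (l a : C) h m (c : C) (v w : V) :
  dact l a h m (PP c * v + w) = PP c * dact l a h m v + dact l a h m w.
Proof.
set N := maxn (size v) (size w).
have Hv : (size v <= N)%N by rewrite leq_maxl.
have Hw : (size w <= N)%N by rewrite leq_maxr.
have Hvw : (size (PP c * v + w)%R <= N)%N.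
  apply: (leq_trans (size_polyD _ _)); rewrite geq_max Hw andbT.
  by rewrite /PP mul_polyC (leq_trans (size_scale_leq _ _)).
rewrite !(dact_widen _ _ _ _ (N:=N)) // big_distrr -big_split /=.
apply: eq_bigr => i _; by rewrite coefD /PP coefCM mul_polyC term_lin.
Qed.

Lemma dact_0 (l a : C) h m : dact l a h m 0 = 0.
Proof. by rewrite /dact size_poly0 big_ord0. Qed.

Lemma dactZ (l a : C) h m (c : C) (v : V) :
  dact l a h m (PP c * v) = PP c * dact l a h m v.
Proof. by have := dact_lin l a h m c v 0; rewrite !addr0 dact_0 addr0. Qed.

Lemma dactD (l a : C) h m (v w : V) :
  dact l a h m (v + w) = dact l a h m v + dact l a h m w.
Proof. by have := dact_lin l a h m 1 v w; rewrite /PP !polyC1 !mul1r. Qed.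

Lemma dactB (l a : C) h m (v w : V) :
  dact l a h m (v - w) = dact l a h m v - dact l a h m w.
Proof.
have := dactD l a h m w (v - w).
rewrite addrC subrK => ->.
by rewrite addrAC subrr add0r.
Qed.

Lemma dact0m (l a : C) h (v : V) : dact l a h 0 v = 'X * v.
Proof.
rewrite (dact_widen _ _ _ _ (N := size v)) //.
have E : forall i f, term l a h 0 i f = 'X^i * ('X * f%:P).
  move=> i f; rewrite /term expr0z.
  have -> : (((0:int)%:~R : C)%:P%:P : V) = 0 by rewrite mulr0z !polyC0.
  have -> : ((((0:int)%:~R : C) *: Gop a h f)%:P : V) = 0.
    by rewrite mulr0z scale0r polyC0.
  have -> : (((((0:int) ^+ 2)%:~R * a) *: Fop a h f)%:P : V) = 0.
    by rewrite expr2 mulr0 mulr0z mul0r scale0r polyC0.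
  by rewrite subr0 addr0 subr0 !polyC1 mul1r.
under eq_bigr do rewrite E.
have -> : 'X * v = 'X * \sum_(i < size v) v`_i *: 'X^i by rewrite -poly_def coefK.
rewrite mulr_sumr; apply: eq_bigr => i _.
rewrite -mul_polyC; ring.
Qed.

Lemma dactC (l a : C) h m (f : {poly C}) : dact l a h m f%:P = term l a h m 0 f.
Proof.
by rewrite (dact_widen _ _ _ _ (N := 1)) ?size_polyC_leq1 // big_ord1 coefC.
Qed.

Lemma dact1C (l a : C) h (f : {poly C}) :
  dact l a h 1 f%:P = PP l * ('X * f%:P + (Gop a h f)%:P - (a *: Fop a h f)%:P).
Proof.
rewrite dactC /term.
have -> : (('X - (((1:int)%:~R : C)%:P)%:P) ^+ 0 : V) = 1 by rewrite expr0.
have -> : (l ^ (1:int) : C) = l by rewrite expr1z.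
have -> : ((1:int)%:~R : C) = 1 by [].
have -> : (((1:int) ^+ 2)%:~R * a : C) = a by rewrite expr1n mul1r.
rewrite scale1r; congr (_ * _); exact: mul1r.
Qed.

Section CL.
Variable th : V -> V.
Hypothesis Hth : Clinear th.

Lemma CL0 : th 0 = 0.
Proof.
have := Hth 1 0 0; rewrite mulr0 addr0 !polyC1 mul1r => E.
by apply: (addrI (th 0)); rewrite addr0 -E.
Qed.

Lemma CLD v w : th (v + w) = th v + th w.
Proof. by have := Hth 1 v w; rewrite !polyC1 !mul1r. Qed.

Lemma CLZ c v : th (PP c * v) = PP c * th v.
Proof. by have := Hth c v 0; rewrite !addr0 CL0 addr0. Qed.

Lemma CLN v : th (- v) = - th v.
Proof. by have := CLZ (-1) v; rewrite /PP !polyCN !polyC1 !mulN1r. Qed.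

Lemma CLB v w : th (v - w) = th v - th w.
Proof. by rewrite CLD CLN. Qed.

Lemma CL_sum n (F : 'I_n -> V) : th (\sum_(i < n) F i) = \sum_(i < n) th (F i).
Proof.
elim: n F => [|n IH] F; first by rewrite !big_ord0 CL0.
by rewrite !big_ord_recr /= CLD IH.
Qed.

End CL.

Lemma Clinear_comb (f g : V -> V) (c : C) :
  Clinear f -> Clinear g -> Clinear (fun v => f v - PP c * g v).
Proof.
move=> Hf Hg a v w; rewrite Hf Hg -/(PP a) -/(PP c).
rewrite !mulrDr !mulrA (mulrC (PP c) (PP a)); ring.
Qed.

Lemma Clinear_comp (f g : V -> V) : Clinear f -> Clinear g -> Clinear (fun v => f (g v)).
Proof. by move=> Hf Hg a v w; rewrite Hg Hf. Qed.

End Work2.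

From mathcomp Require Import ring zify.
Set Implicit Arguments. Unset Strict Implicit. Unset Printing Implicit Defensive.

Section Work3.
Variable R : realType.
Local Notation C := (R[i]).
Local Notation V := {poly {poly C}}.

Lemma size_deriv_le (q : {poly C}) : (size q^`() <= size q)%N.
Proof.
apply/leq_sizeP => j Hj; rewrite coef_deriv nth_default ?mul0rn //.
exact: leq_trans Hj (leqnSn _).
Qed.

Lemma hom_zero (l1 a1 xi1 eta1 l2 a2 : C) h2 (th : V -> V) :
  xi1 != 0 -> l1 != 0 -> Clinear th ->
  (forall v, th (dact l1 a1 (xi1 *: 'X + eta1%:P) 0 v) = dact l2 a2 h2 0 (th v)) ->
  (forall v, th (dact l1 a1 (xi1 *: 'X + eta1%:P) 1 v) = dact l2 a2 h2 1 (th v)) ->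
  th 1 = 0 -> forall v, th v = 0.
Proof.
move=> Hxi Hl Hth H0 H1 Hone.
set h1 := xi1 *: 'X + eta1%:P in H0 H1.
have HX : forall v, th ('X * v) = 'X * th v.
  by move=> v; rewrite -(dact0m l1 a1 h1) H0 dact0m.
have HW : forall f, th f%:P = 0 ->
    th ('X * f%:P + (Gop a1 h1 f)%:P - (a1 *: Fop a1 h1 f)%:P) = 0.
  move=> f Hf; have := H1 f%:P; rewrite Hf dact_0 dact1C (CLZ Hth).
  by move/eqP; rewrite mulf_eq0 PP_eq0 (negbTE Hl) /= => /eqP.
have Hc : forall n (f : {poly C}), (size f <= n.+1)%N -> th f%:P = 0.
  elim=> [|n IH] f Hf.
    rewrite (size1_polyC Hf).
    have -> : ((f`_0)%:P%:P : V) = PP f`_0 * 1 by rewrite mulr1.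
    by rewrite (CLZ Hth) Hone mulr0.
  rewrite -(poly_take_drop 1 f) expr1 rmorphD /= (CLD Hth).
  rewrite IH; last by rewrite (leq_trans (size_take_poly _ _)).
  rewrite add0r.
  set q := drop_poly 1 f.
  have Hq : (size q <= n.+1)%N by rewrite size_drop_poly; lia.
  have Hq0 : th q%:P = 0 by apply: IH.
  have E0 : Gop a1 h1 q - (xi1 * a1 + eta1) *: q + 'X * q^`() = xi1 *: (q * 'X).
    rewrite Gop_lin -!mul_polyC; ring.
  have E1 : q * 'X = xi1^-1 *: (Gop a1 h1 q - (xi1 * a1 + eta1) *: q + 'X * q^`()).
    by rewrite E0 scalerA mulVf // scale1r.
  have HF : th (Fop a1 h1 q)%:P = 0.
    apply: IH; rewrite Fop_lin; apply/leq_sizeP => j Hj.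
    rewrite coefB coefZ coef_deriv !nth_default ?mulr0 ?mul0rn ?subr0 //.
      exact: leq_trans Hq (leq_trans Hj (leqnSn _)).
    exact: leq_trans Hq Hj.
  have HXd : th ('X * q^`())%:P = 0.
    apply: IH; apply/leq_sizeP => j Hj.
    rewrite coefXM; case: j Hj => // j Hj /=.
    rewrite coef_deriv nth_default ?mul0rn //; exact: leq_trans Hq Hj.
  have HG : th (Gop a1 h1 q)%:P = 0.
    have := HW q Hq0.
    rewrite (CLB Hth) (CLD Hth) HX Hq0 mulr0 add0r cPP (CLZ Hth) HF mulr0 subr0 //.
  rewrite E1 cPP (CLZ Hth) 2!polyCD polyCN (CLD Hth) (CLB Hth) cPP (CLZ Hth) Hq0 HG HXd.
  by rewrite mulr0 subr0 addr0 mulr0.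
have HXn : forall i w, th ('X^i * w) = 'X^i * th w.
  elim=> [|i IH] w; first by rewrite !expr0 !mul1r.
  by rewrite exprS -mulrA HX IH mulrA.
move=> v.
have -> : v = \sum_(i < size v) 'X^i * (v`_i)%:P.
  rewrite -[LHS]coefK poly_def; apply: eq_bigr => i _.
  by rewrite -mul_polyC mulrC.
rewrite CL_sum //; apply: big1 => i _.
by rewrite HXn (Hc (size v`_i)) ?mulr0 // leqnSn.
Qed.

End Work3.

From mathcomp Require Import ring zify.
Set Implicit Arguments. Unset Strict Implicit. Unset Printing Implicit Defensive.

Section Work4.
Variable R : realType.
Local Notation C := (R[i]).
Local Notation bs := Defs.bseq.
Local Arguments Defs.bseq : simpl never.

Lemma coef_gpoly (d : C) n j : (gpoly d n)`_j = 'C(n, j)%:R * bs d (n - j).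
Proof.
rewrite /gpoly coef_sumMXn (big_ord1_cond_eq _ (fun i => (('C(n, i))%:R * bs d (n - i))) predT).
rewrite andbT; case: ltnP => // Hj; by rewrite bin_small ?mul0r.
Qed.

Lemma bseqSS (d : C) r : bs d r.+2 = r.+1%:R * bs d r.+1 + r.+1%:R * d * bs d r.
Proof. by []. Qed.

Lemma bseq1 (d : C) : bs d 1 = 0.
Proof. by []. Qed.

Lemma gpoly0 (d : C) : gpoly d 0 = 1.
Proof.
apply/polyP => j; rewrite coef_gpoly coefC.
case: j => [|j] /=; first by rewrite bin0 mul1r.
by rewrite bin0n mul0r.
Qed.

Lemma gpoly1 (d : C) : gpoly d 1 = 'X.
Proof.
apply/polyP => j; rewrite coef_gpoly coefX.
case: j => [|[|j]] /=; first by rewrite mulr0.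
  by rewrite binn mulr1.
by rewrite bin_small // mul0r.
Qed.

Lemma gpoly_deriv (d : C) n : (gpoly d n.+1)^`() = n.+1%:R *: gpoly d n.
Proof.
apply/polyP => j; rewrite coef_deriv coefZ !coef_gpoly.
by rewrite subSS -mulrnAl -mulr_natl -natrM -mul_bin_diag /= natrM mulrA.
Qed.

Lemma gcoefI (d : C) n j :
  ('C(n.+1, j.+1))%:R * bs d (n.+1 - j)
  = n.+1%:R * ('C(n, j.+1))%:R * bs d (n - j) + d * n.+1%:R * ('C(n, j.+1))%:R * bs d (n - j.+1).
Proof.
case: (ltngtP j n) => Hjn.
- have [r Hr] : exists r, n = (j + r.+1)%N by exists (n - j.+1)%N; lia.
  have E1 : (n.+1 - j = r.+2)%N by lia.
  have E2 : (n - j = r.+1)%N by lia.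
  have E3 : (n - j.+1 = r)%N by lia.
  rewrite E1 E2 E3 bseqSS.
  have Hb := mul_bin_down n.+1 j.+1.
  have E4 : (n.+1 - j.+1 = r.+1)%N by lia.
  rewrite E4 /= in Hb.
  have HbC : ('C(n.+1, j.+1))%:R * (r.+1)%:R = (n.+1)%:R * ('C(n, j.+1))%:R :> C.
    by rewrite -!natrM mulnC Hb.
  apply/eqP; rewrite -subr_eq0; apply/eqP.
  transitivity ((('C(n.+1, j.+1))%:R * (r.+1)%:R - (n.+1)%:R * ('C(n, j.+1))%:R)
                  * (bs d r.+1 + d * bs d r)); first by ring.
  by rewrite HbC subrr mul0r.
- have H1 : 'C(n.+1, j.+1) = 0%N by rewrite bin_small //; lia.
  have H2 : 'C(n, j.+1) = 0%N by rewrite bin_small //; lia.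
  rewrite H1 H2; ring.
- subst j; rewrite subnn binn subSnn bseq1 bin_small ?mulr0 ?mul0r ?addr0 //.
Qed.

Lemma gcoef_rec (d : C) n j :
  ('C(n.+2, j.+1))%:R * bs d (n.+1 - j)
  = n.+1%:R * (('C(n.+1, j.+1))%:R * bs d (n - j)) + ('C(n.+1, j))%:R * bs d (n.+1 - j)
    - n.+1%:R * (('C(n, j))%:R * bs d (n - j)) + d * n.+1%:R * (('C(n, j.+1))%:R * bs d (n - j.+1)).
Proof.
rewrite (binS n.+1 j) natrD mulrDl gcoefI (binS n j) natrD; ring.
Qed.

Lemma gpoly_rec (d : C) n :
  gpoly d n.+2 = n.+1%:R *: gpoly d n.+1 + 'X * gpoly d n.+1
     - n.+1%:R *: ('X * gpoly d n) + (d * n.+1%:R) *: gpoly d n.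
Proof.
apply/polyP => j; rewrite coefD coefB coefD !coefZ !coefXM !coef_gpoly.
case: j => [|j] /=.
  rewrite !bin0 !subn0 bseqSS; ring.
rewrite subSS gcoef_rec; ring.
Qed.

End Work4.

From mathcomp Require Import ring zify.
Set Implicit Arguments. Unset Strict Implicit. Unset Printing Implicit Defensive.

Section Work5.
Variable R : realType.
Local Notation C := (R[i]).
Local Notation V := {poly {poly C}}.
Local Notation bs := Defs.bseq.
Local Arguments Defs.bseq : simpl never.

Definition islin (L : {poly C} -> {poly C}) :=
  forall (c : C) p q, L (c *: p + q) = c *: L p + L q.

Lemma islin0 L : islin L -> L 0 = 0.
Proof.
move=> HL; have := HL 1 0 0; rewrite scaler0 addr0 scale1r => E.
by apply: (addrI (L 0)); rewrite addr0 -E.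
Qed.

Lemma islinD L : islin L -> forall p q, L (p + q) = L p + L q.
Proof. by move=> HL p q; have := HL 1 p q; rewrite !scale1r. Qed.

Lemma islinZ L : islin L -> forall c p, L (c *: p) = c *: L p.
Proof. by move=> HL c p; have := HL c p 0; rewrite !addr0 islin0 // addr0. Qed.

Lemma islinN L : islin L -> forall p, L (- p) = - L p.
Proof. by move=> HL p; rewrite -scaleN1r islinZ // scaleN1r. Qed.

Lemma islinB L : islin L -> forall p q, L (p - q) = L p - L q.
Proof. by move=> HL p q; rewrite islinD // islinN. Qed.

Lemma lin_ext (L1 L2 : {poly C} -> {poly C}) : islin L1 -> islin L2 ->
  (forall n, L1 'X^n = L2 'X^n) -> forall p, L1 p = L2 p.
Proof.
move=> H1 H2 HX p; rewrite -(coefK p) poly_def.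
elim: (size p) => [|n IH]; first by rewrite big_ord0 (islin0 H1) (islin0 H2).
by rewrite big_ord_recr /= (islinD H1) (islinD H2) IH (islinZ H1) (islinZ H2) HX.
Qed.

Definition T0 (d : C) (p : {poly C}) : {poly C} := \sum_(k < size p) p`_k *: gpoly d k.

Lemma T0_widen (d : C) (p : {poly C}) N : (size p <= N)%N -> T0 d p = \sum_(k < N) p`_k *: gpoly d k.
Proof.
move=> HN; rewrite /T0 (big_ord_widen N (fun k => p`_k *: gpoly d k)) //.
rewrite big_mkcond /=; apply: eq_bigr => i _; case: ifP => // /negbT.
by rewrite -leqNgt => Hi; rewrite nth_default // scale0r.
Qed.

Lemma T0_lin (d : C) : islin (T0 d).
Proof.
move=> c p q.
set N := maxn (size p) (size q).
have Hp : (size p <= N)%N by rewrite leq_maxl.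
have Hq : (size q <= N)%N by rewrite leq_maxr.
have Hpq : (size (c *: p + q)%R <= N)%N.
  apply: (leq_trans (size_polyD _ _)); rewrite geq_max Hq andbT.
  exact: leq_trans (size_scale_leq _ _) Hp.
rewrite (T0_widen d Hpq) (T0_widen d Hp) (T0_widen d Hq) scaler_sumr -big_split /=.
by apply: eq_bigr => i _; rewrite coefD coefZ scalerDl scalerA.
Qed.

Lemma T0_Xn (d : C) n : T0 d 'X^n = gpoly d n.
Proof.
rewrite /T0 size_polyXn big_ord_recr /= coefXn eqxx scale1r big1 ?add0r //.
by move=> i _; rewrite coefXn ltn_eqF ?ltn_ord // scale0r.
Qed.

Lemma deriv_lin : islin (@deriv C).
Proof. by move=> c p q; rewrite derivD derivZ. Qed.

Lemma T0_deriv (d : C) (p : {poly C}) : T0 d p^`() = (T0 d p)^`().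
Proof.
apply: (lin_ext (L1 := fun p => T0 d p^`()) (L2 := fun p => (T0 d p)^`())).
- by move=> c p1 q1; rewrite deriv_lin T0_lin.
- by move=> c p1 q1; rewrite T0_lin deriv_lin.
move=> n; rewrite derivXn T0_Xn; case: n => [|n].
  by rewrite mulr0n (islin0 (T0_lin d)) gpoly0 derivC.
by rewrite gpoly_deriv -scaler_nat (islinZ (T0_lin d)) T0_Xn.
Qed.

Definition Au (b e : C) (p : {poly C}) := (b + e) *: p + ('X - e%:P) * (p - p^`()).

Lemma Au_lin (b e : C) : islin (Au b e).
Proof. move=> c p q; rewrite /Au derivD derivZ -!mul_polyC; ring. Qed.

Lemma T0_Au (b e1 e2 : C) p : T0 (e2 - e1) (Au b e1 p) = Au b e2 (T0 (e2 - e1) p).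
Proof.
set d := e2 - e1.
apply: (lin_ext (L1 := fun p => T0 d (Au b e1 p)) (L2 := fun p => Au b e2 (T0 d p))).
- by move=> c p1 q1; rewrite Au_lin T0_lin.
- by move=> c p1 q1; rewrite T0_lin Au_lin.
move=> n; rewrite T0_Xn; case: n => [|n].
  have -> : Au b e1 'X^0 = 'X^1 + b *: 'X^0.
    by rewrite /Au expr0 derivC subr0 expr1 -!mul_polyC; ring.
  rewrite (islinD (T0_lin d)) (islinZ (T0_lin d)) !T0_Xn gpoly0 gpoly1.
  by rewrite /Au derivC subr0 -!mul_polyC; ring.
have -> : Au b e1 'X^(n.+1) = 'X^(n.+2) + (b - n.+1%:R) *: 'X^(n.+1) + (e1 * n.+1%:R) *: 'X^n.
  rewrite /Au derivXn /= -!mul_polyC !exprS -mulr_natl.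
  rewrite -polyC_natr; ring.
rewrite !(islinD (T0_lin d)) !(islinZ (T0_lin d)) !T0_Xn gpoly_rec.
rewrite /Au gpoly_deriv -!mul_polyC /d; ring.
Qed.

End Work5.

From mathcomp Require Import ring zify.
Set Implicit Arguments. Unset Strict Implicit. Unset Printing Implicit Defensive.

Section Work6.
Variable R : realType.
Local Notation C := (R[i]).
Local Notation V := {poly {poly C}}.

Definition inv (xi eta : C) : {poly C} := xi^-1 *: ('X - eta%:P).
Definition Tm (d xi1 eta1 : C) (h2 : {poly C}) (f : {poly C}) :=
  T0 d (f \Po inv xi1 eta1) \Po h2.
Definition phi0 (d xi1 eta1 : C) (h2 : {poly C}) (v : V) : V :=
  \poly_(i < size v) Tm d xi1 eta1 h2 v`_i.

Lemma hinv (xi eta : C) : xi != 0 -> (xi *: 'X + eta%:P) \Po inv xi eta = 'X.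
Proof.
move=> Hxi; rewrite comp_polyD comp_polyZ comp_polyX comp_polyC /inv scalerA.
by rewrite mulfV // scale1r subrK.
Qed.

Lemma invh (xi eta : C) : xi != 0 -> inv xi eta \Po (xi *: 'X + eta%:P) = 'X.
Proof.
move=> Hxi; rewrite /inv comp_polyZ comp_polyB comp_polyX comp_polyC addrK scalerA.
by rewrite mulVf // scale1r.
Qed.

Lemma compK (xi eta : C) (f : {poly C}) : xi != 0 ->
  f = (f \Po inv xi eta) \Po (xi *: 'X + eta%:P).
Proof. by move=> Hxi; rewrite -comp_polyA invh // comp_polyXr. Qed.

Lemma Tm_comp (d xi1 eta1 : C) h2 p : xi1 != 0 ->
  Tm d xi1 eta1 h2 (p \Po (xi1 *: 'X + eta1%:P)) = T0 d p \Po h2.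
Proof. by move=> Hxi; rewrite /Tm -comp_polyA hinv // comp_polyXr. Qed.

Lemma Tm_lin (d xi1 eta1 : C) h2 : islin (Tm d xi1 eta1 h2).
Proof.
move=> c p q; by rewrite /Tm comp_polyD comp_polyZ T0_lin comp_polyD comp_polyZ.
Qed.

Lemma hderiv (xi eta : C) : (xi *: 'X + eta%:P)^`() = xi%:P.
Proof. by rewrite derivD derivZ derivX derivC addr0 -mul_polyC mulr1. Qed.

Lemma Fop_comp (a xi eta : C) p :
  Fop a (xi *: 'X + eta%:P) (p \Po (xi *: 'X + eta%:P))
  = xi *: ((p - p^`()) \Po (xi *: 'X + eta%:P)).
Proof.
rewrite Fop_lin deriv_comp hderiv comp_polyB scalerBr; congr (_ - _).
by rewrite mulrC mul_polyC.
Qed.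

Lemma Gop_comp (a xi eta : C) p :
  Gop a (xi *: 'X + eta%:P) (p \Po (xi *: 'X + eta%:P))
  = Au (xi * a) eta p \Po (xi *: 'X + eta%:P).
Proof.
rewrite /Gop Fop_comp /Au !hornerE.
set H := xi *: 'X + eta%:P.
have -> : ((xi * a + eta) *: p + ('X - eta%:P) * (p - p^`())) \Po H
    = (xi * a + eta) *: (p \Po H) + (H - eta%:P) * ((p - p^`()) \Po H).
  by rewrite !comp_polyB !comp_polyD comp_polyZ comp_polyM !comp_polyB comp_polyX comp_polyC.
rewrite /H -!mul_polyC; ring.
Qed.

Section Rel.
Variables (a1 xi1 eta1 a2 xi2 eta2 : C).
Hypothesis Hxi1 : xi1 != 0.
Hypothesis Hb : a1 * xi1 = a2 * xi2.
Local Notation h1 := (xi1 *: 'X + eta1%:P).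
Local Notation h2 := (xi2 *: 'X + eta2%:P).
Local Notation T := (Tm (eta2 - eta1) xi1 eta1 h2).

Lemma TF f : a1 *: T (Fop a1 h1 f) = a2 *: Fop a2 h2 (T f).
Proof.
rewrite (compK eta1 f Hxi1); set p := f \Po _.
rewrite Fop_comp (islinZ (Tm_lin _ _ _ _)) !Tm_comp // Fop_comp.
rewrite (islinB (T0_lin _)) T0_deriv !scalerA Hb; congr (_ *: _); ring.
Qed.

Lemma TG f : T (Gop a1 h1 f) = Gop a2 h2 (T f).
Proof.
rewrite (compK eta1 f Hxi1); set p := f \Po _.
rewrite Gop_comp !Tm_comp // T0_Au Gop_comp.
by have -> : xi2 * a2 = xi1 * a1 by rewrite mulrC -Hb mulrC.
Qed.

End Rel.

Lemma coef_phi0 d xi1 eta1 h2 (v : V) i : (phi0 d xi1 eta1 h2 v)`_i = Tm d xi1 eta1 h2 v`_i.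
Proof.
rewrite /phi0 coef_poly; case: ltnP => // Hi.
by rewrite nth_default // (islin0 (Tm_lin _ _ _ _)).
Qed.

Lemma phi0_Clinear d xi1 eta1 h2 : Clinear (phi0 d xi1 eta1 h2).
Proof.
move=> a v w; apply/polyP => i.
by rewrite coefD coefCM !coef_phi0 coefD coefCM !mul_polyC (Tm_lin _ _ _ _).
Qed.

Lemma phi0_map d xi1 eta1 h2 (q f : {poly C}) :
  phi0 d xi1 eta1 h2 (q^:P * f%:P) = q^:P * (Tm d xi1 eta1 h2 f)%:P.
Proof.
apply/polyP => i; rewrite coef_phi0 !coefMC !coef_map_id0 ?polyC0 //.
by rewrite !mul_polyC (islinZ (Tm_lin _ _ _ _)).
Qed.

Definition termg (Lm M K a : C) (h : {poly C}) (i : nat) (f : {poly C}) : V :=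
  Lm%:P%:P * (('X - M%:P%:P) ^+ i *
      ('X * f%:P + (M *: Gop a h f)%:P - ((K * a) *: Fop a h f)%:P)).

Lemma term_eq (l a : C) h m i f :
  term l a h m i f = termg (l ^ m) (m%:~R) ((m ^+ 2)%:~R) a h i f.
Proof. by []. Qed.

Lemma termg_split (Lm M K a : C) h i f :
  termg Lm M K a h i f =
  (Lm%:P * ('X - M%:P) ^+ i * 'X)^:P * f%:P
  + (Lm%:P * ('X - M%:P) ^+ i)^:P * (M *: Gop a h f - (K * a) *: Fop a h f)%:P.
Proof.
rewrite /termg !rmorphM rmorphXn rmorphB /= map_polyX !map_polyC /= polyCB; ring.
Qed.

End Work6.

From mathcomp Require Import ring zify.
Set Implicit Arguments. Unset Strict Implicit. Unset Printing Implicit Defensive.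

Section Work7.
Variable R : realType.
Local Notation C := (R[i]).
Local Notation V := {poly {poly C}}.

Section Hom.
Variables (l a1 xi1 eta1 a2 xi2 eta2 : C).
Hypothesis Hxi1 : xi1 != 0.
Hypothesis Hb : a1 * xi1 = a2 * xi2.
Local Notation h1 := (xi1 *: 'X + eta1%:P).
Local Notation h2 := (xi2 *: 'X + eta2%:P).
Local Notation T := (Tm (eta2 - eta1) xi1 eta1 h2).
Local Notation ph := (phi0 (eta2 - eta1) xi1 eta1 h2).

Lemma phi0_term Lm M K i f :
  ph (termg Lm M K a1 h1 i f) = termg Lm M K a2 h2 i (T f).
Proof.
rewrite !termg_split (CLD (phi0_Clinear _ _ _ _)) !phi0_map.
congr (_ + _ * _%:P).
rewrite (islinB (Tm_lin _ _ _ _)) !(islinZ (Tm_lin _ _ _ _)) (@TG _ a1 xi1 eta1 a2 xi2 eta2 Hxi1 Hb).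
by rewrite -!scalerA (@TF _ a1 xi1 eta1 a2 xi2 eta2 Hxi1 Hb).
Qed.

Lemma phi0_hom m v : ph (dact l a1 h1 m v) = dact l a2 h2 m (ph v).
Proof.
rewrite (dact_widen _ _ _ _ (N := size v)) // (dact_widen _ _ _ _ (N := size v)).
  rewrite (CL_sum (phi0_Clinear _ _ _ _)); apply: eq_bigr => i _.
  by rewrite coef_phi0 !term_eq phi0_term.
exact: size_poly.
Qed.

Lemma phi0_spec : phi_spec (eta2 - eta1) h1 h2 ph.
Proof.
move=> n i.
have E : ('X^i : V) = ('X^i : {poly C})^:P by rewrite rmorphXn /= map_polyX.
rewrite E phi0_map -E; congr (_ * _%:P).
rewrite /Tm -comp_Xn_poly -comp_polyA hinv // comp_polyXr T0_Xn //.
Qed.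

Lemma phi0_one : ph 1 = 1.
Proof.
have := phi0_spec 0 0; rewrite !expr0 polyC1 mul1r gpoly0 comp_polyC => ->.
by rewrite mul1r polyC1.
Qed.

End Hom.

Lemma coef_hpow (xi eta : C) N :
  (forall j, (N < j)%N -> ((xi *: 'X + eta%:P) ^+ N)`_j = 0) /\
  ((xi *: 'X + eta%:P) ^+ N)`_N = xi ^+ N.
Proof.
elim: N => [|N [IH1 IH2]].
  split; last by rewrite !expr0 coefC.
  by move=> j Hj; rewrite expr0 coefC; case: j Hj.
have E : forall j, ((xi *: 'X + eta%:P) ^+ N.+1)`_j
    = xi * (if j == 0%N then 0 else ((xi *: 'X + eta%:P) ^+ N)`_j.-1)
      + ((xi *: 'X + eta%:P) ^+ N)`_j * eta.
  move=> j; rewrite exprSr mulrDr coefD -scalerAr coefZ coefMX coefMC //.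
split.
  move=> j Hj; rewrite E (IH1 j); last by lia.
  case: j Hj => [|j] Hj //=.
  rewrite IH1; last by lia.
  by rewrite mulr0 mul0r addr0.
by rewrite E (IH1 N.+1) // mul0r addr0 /= IH2 exprS.
Qed.

Section Uniq.
Variables (a1 xi1 eta1 xi2 eta2 : C).
Hypothesis Hxi1 : xi1 != 0.
Local Notation h1 := (xi1 *: 'X + eta1%:P).
Local Notation h2 := (xi2 *: 'X + eta2%:P).
Local Notation ph := (phi0 (eta2 - eta1) xi1 eta1 h2).

Lemma Clinear_zero_basis (th : V -> V) : Clinear th ->
  (forall n i, th ('X^i * (h1 ^+ n)%:P) = 0) -> forall v, th v = 0.
Proof.
move=> Hth Hb.
have HC : forall N (f : {poly C}) i, (size f <= N)%N -> th ('X^i * f%:P) = 0.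
  elim=> [|N IH] f i Hf.
    move: Hf; rewrite leqn0 size_poly_eq0 => /eqP ->.
    by rewrite polyC0 mulr0 (CL0 Hth).
  set c := f`_N / xi1 ^+ N.
  set g := f - c *: h1 ^+ N.
  have [H1 H2] := coef_hpow xi1 eta1 N.
  have Hg : (size g <= N)%N.
    apply/leq_sizeP => j Hj; rewrite /g coefB coefZ.
    case: (ltngtP N j) => Hjn.
    - by rewrite H1 // mulr0 subr0; apply/(leq_sizeP _ _ Hf).
    - by move: Hj; rewrite leqNgt Hjn.
    by subst j; rewrite H2 /c divfK ?subrr // expf_neq0.
  have -> : ('X^i * f%:P : V) = PP c * ('X^i * (h1 ^+ N)%:P) + 'X^i * g%:P.
    by rewrite /g polyCB cPP; ring.
  by rewrite (CLD Hth) (CLZ Hth) Hb mulr0 add0r IH.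
move=> v.
have -> : v = \sum_(i < size v) 'X^i * (v`_i)%:P.
  rewrite -[LHS]coefK poly_def; apply: eq_bigr => i _.
  by rewrite -mul_polyC mulrC.
by rewrite (CL_sum Hth); apply: big1 => i _; rewrite (HC (size v`_i)).
Qed.

Lemma spec_unique phi : Clinear phi -> phi_spec (eta2 - eta1) h1 h2 phi ->
  forall v, phi v = ph v.
Proof.
move=> Hphi Hs v.
have Hth := Clinear_comb 1 Hphi (phi0_Clinear (eta2 - eta1) xi1 eta1 h2).
have H := Clinear_zero_basis Hth.
have Hs0 : phi_spec (eta2 - eta1) h1 h2 ph by apply: phi0_spec.
have : phi v - PP 1 * ph v = 0.
  apply: H => n i /=.
  by rewrite Hs Hs0 /PP !polyC1 mul1r subrr.
by move/eqP; rewrite /PP !polyC1 mul1r subr_eq0 => /eqP.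
Qed.

End Uniq.
End Work7.

From mathcomp Require Import ring zify.
Set Implicit Arguments. Unset Strict Implicit. Unset Printing Implicit Defensive.

Section Work8.
Variable R : realType.
Local Notation C := (R[i]).
Local Notation V := {poly {poly C}}.

Lemma poly_nat_roots (p : V) : (forall n : nat, p.[n%:R] = 0) -> p = 0.
Proof.
move=> Hp; apply/eqP; apply/negP => Hp0.
have Hu : uniq [seq (i%:R : {poly C}) | i <- iota 0 (size p)].
  rewrite map_inj_uniq ?iota_uniq // => i j /eqP.
  by rewrite -!polyC_natr (inj_eq polyC_inj) eqr_nat => /eqP.
have Hr : all (root p) [seq (i%:R : {poly C}) | i <- iota 0 (size p)].
  by apply/allP => x /mapP [i _ ->]; apply/rootP.
have := max_poly_roots (introN eqP (fun E => Hp0 (introT eqP E))) Hr Hu.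
by rewrite size_map size_iota ltnn.
Qed.

Lemma coefXsubC_exp (c : {poly C}) i j : (i < j)%N -> ((('X - c%:P) ^+ i) : V)`_j = 0.
Proof. by move=> Hij; rewrite nth_default // size_exp_XsubC. Qed.

Lemma coefXsubC_exp_top (c : {poly C}) i : ((('X - c%:P) ^+ i) : V)`_i = 1.
Proof.
have := monic_exp i (monicXsubC c); rewrite monicE lead_coefE size_exp_XsubC /=.
by move/eqP.
Qed.

Lemma coefXsubC_exp0 (c : {poly C}) i : ((('X - c%:P) ^+ i) : V)`_0 = (- c) ^+ i.
Proof. by rewrite -horner_coef0 horner_exp !hornerE ?sub0r ?add0r. Qed.

Lemma coef_termg (Lm M K a : C) h i f j :
  (termg Lm M K a h i f)`_j =
  Lm%:P * ((if j == 0%N then 0 else ((('X - M%:P%:P) ^+ i) : V)`_j.-1) * f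
           + ((('X - M%:P%:P) ^+ i) : V)`_j * (M *: Gop a h f - (K * a) *: Fop a h f)).
Proof.
rewrite /termg coefCM; congr (_ * _).
have -> : ('X - M%:P%:P) ^+ i * ('X * f%:P + (M *: Gop a h f)%:P - ((K * a) *: Fop a h f)%:P)
   = (('X - M%:P%:P) ^+ i * 'X) * f%:P + ('X - M%:P%:P) ^+ i * (M *: Gop a h f - (K * a) *: Fop a h f)%:P :> V.
  rewrite polyCB; ring.
by rewrite coefD !coefMC coefMX.
Qed.

Lemma dact_top (l a : C) h m (v : V) k : size v = k.+1 ->
  (dact l a h m v)`_k.+1 = (l ^ m)%:P * v`_k.
Proof.
move=> Hs; rewrite (dact_widen _ _ _ _ (N := k.+1)) ?Hs // coef_sum big_ord_recr /=.
rewrite big1 ?add0r.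
  by rewrite term_eq coef_termg /= coefXsubC_exp_top coefXsubC_exp // mul0r addr0 mul1r.
move=> i _; rewrite term_eq coef_termg /= !coefXsubC_exp ?mul0r ?addr0 ?mulr0 //.
exact: ltnW (ltn_ord i).
Qed.

Lemma dact_coef0 (l a : C) h m (v : V) :
  (dact l a h m v)`_0 = \sum_(i < size v) (l ^ m)%:P *
     ((- (m%:~R : C)%:P) ^+ i * ((m%:~R : C) *: Gop a h v`_i - (((m ^+ 2)%:~R : C) * a) *: Fop a h v`_i)).
Proof.
rewrite /dact coef_sum; apply: eq_bigr => i _.
by rewrite -/(term _ _ _ _ _ _) term_eq coef_termg /= coefXsubC_exp0 mul0r add0r.
Qed.

Lemma dactCn (l a : C) h (n : nat) (f : {poly C}) :
  dact l a h n f%:P = (l ^+ n)%:P%:P * ('X * f%:P + (n%:R *: Gop a h f)%:P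
                                      - ((n%:R ^+ 2 * a) *: Fop a h f)%:P).
Proof.
rewrite dactC term_eq /termg.
have -> : (('X - (((Posz n)%:~R : C)%:P)%:P) ^+ 0 : V) = 1 by rewrite expr0.
have -> : (l ^ (Posz n) : C) = l ^+ n by rewrite exprnP.
have -> : ((Posz n)%:~R : C) = n%:R by [].
have -> : (((Posz n) ^+ 2)%:~R : C) = n%:R ^+ 2 by rewrite rmorphXn.
congr (_ * _); exact: mul1r.
Qed.

End Work8.

From mathcomp Require Import ring zify.
Set Implicit Arguments. Unset Strict Implicit. Unset Printing Implicit Defensive.

Section Work9.
Variable R : realType.
Local Notation C := (R[i]).
Local Notation V := {poly {poly C}}.

Lemma Fop_inj (a xi eta : C) (p : {poly C}) : xi != 0 ->
  Fop a (xi *: 'X + eta%:P) p = 0 -> p = 0.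
Proof.
move=> Hxi; rewrite Fop_lin => Hp; apply/eqP; apply: contraT => Hp0.
have : (xi *: p - p^`())`_(size p).-1 != 0.
  rewrite coefB coefZ coef_deriv.
  rewrite (nth_default _ (n := (size p).-1.+1)); last first.
    by rewrite prednK // size_poly_gt0.
  rewrite mul0rn subr0 mulf_neq0 //.
  by rewrite -lead_coefE lead_coef_eq0.
by rewrite Hp coef0 eqxx.
Qed.

Lemma dact0m' (l a : C) h (v : V) : dact l a h (Posz 0) v = 'X * v.
Proof. exact: dact0m. Qed.

Lemma hom_sconst (l a1 a2 xi2 eta2 : C) h1 (th : V -> V) :
  l != 0 -> a2 != 0 -> xi2 != 0 -> Clinear th ->
  (forall (n : nat) v, th (dact l a1 h1 n v) = dact l a2 (xi2 *: 'X + eta2%:P) n (th v)) ->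
  forall f, (size (th f%:P) <= 1)%N.
Proof.
move=> Hl Ha2 Hxi2 Hth Hh f.
set h2 := xi2 *: 'X + eta2%:P in Hh.
have HX : forall v, th ('X * v) = 'X * th v.
  by move=> v; have := Hh 0%N v; rewrite !dact0m'.
set P := th f%:P.
case Hsz : (size P) => [|[|k]] //.
set A0 := (th (Gop a1 h1 f)%:P)`_0.
set B0 := (th (Fop a1 h1 f)%:P)`_0.
have Eq : forall n : nat,
    (n%:R : C)%:P * A0 - (n%:R ^+ 2 * a1)%:P * B0 =
    \sum_(i < k.+2) (- (n%:R : C)%:P) ^+ i *
       ((n%:R : C) *: Gop a2 h2 P`_i - (n%:R ^+ 2 * a2) *: Fop a2 h2 P`_i).
  move=> n; have := congr1 (fun v : V => v`_0) (Hh n f%:P).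
  rewrite dactCn dact_coef0 Hsz.
  have -> : (l ^ (Posz n) : C) = l ^+ n by rewrite exprnP.
  have -> : ((Posz n)%:~R : C) = n%:R by [].
  have -> : (((Posz n) ^+ 2)%:~R : C) = n%:R ^+ 2 by rewrite rmorphXn.
  rewrite -/(PP (l ^+ n)) (CLZ Hth) coefCM (CLB Hth) (CLD Hth) HX -/P 2!cPP.
  rewrite 2!(CLZ Hth) coefB coefD coefXM /= !coefCM add0r -/A0 -/B0.
  rewrite -mulr_sumr => /mulfI; apply.
  by rewrite polyC_eq0 expf_neq0.
pose Q : V := A0%:P * 'X - (a1 *: B0)%:P * 'X^2 - \sum_(i < k.+2)
   (((-1) ^+ i *: Gop a2 h2 P`_i)%:P * 'X^(i.+1)
    - (((-1) ^+ i * a2) *: Fop a2 h2 P`_i)%:P * 'X^(i.+2)).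
have HQ : Q = 0.
  apply: poly_nat_roots => n.
  rewrite /Q !hornerD !hornerN horner_sum !hornerCM hornerX hornerXn.
  under eq_bigr => i _ do rewrite hornerD hornerN !hornerCM !hornerXn.
  have HS : \sum_(i < k.+2) (- (n%:R : C)%:P) ^+ i *
       ((n%:R : C) *: Gop a2 h2 P`_i - (n%:R ^+ 2 * a2) *: Fop a2 h2 P`_i)
     = \sum_(i < k.+2) (((-1) ^+ i *: Gop a2 h2 P`_i) * (n%:R : {poly C}) ^+ i.+1
        - (((-1) ^+ i * a2) *: Fop a2 h2 P`_i) * (n%:R : {poly C}) ^+ i.+2).
    apply: eq_bigr => i _; rewrite -!mul_polyC -polyC_natr.
    rewrite (exprNn ((n%:R : C)%:P) i).
    rewrite (exprS ((n%:R:C)%:P) i.+1) (exprS ((n%:R:C)%:P) i) [((-1) ^+ i * a2)%:P]polyCM.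
    have -> : (((-1) ^+ i : C)%:P) = ((-1) ^+ i : {poly C}) by rewrite rmorphXn rmorphN1.
    set Y := ((n%:R : C)%:P) ^+ i; set S := ((-1) ^+ i : {poly C}); ring.
  have := Eq n; rewrite HS => <-.
  rewrite -!mul_polyC -polyC_natr; ring.
have := congr1 (fun q : V => q`_(k.+3)) HQ.
rewrite /Q coef0 !coefB !coefCM coefX coefXn coef_sum big_ord_recr /=.
rewrite big1; last first.
  move=> i _; rewrite coefB !coefCM !coefXn.
  have Hi := ltn_ord i.
  have H1 : (k.+3 == i.+1)%N = false by apply/negbTE/eqP; lia.
  have H2 : (k.+3 == i.+2)%N = false by apply/negbTE/eqP; lia.
  by rewrite H1 H2 !mulr0 subrr.
have H3 : (k.+3 == k.+2)%N = false by apply/negbTE/eqP; lia.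
rewrite coefB !coefCM !coefXn H3 eqxx => HH.
have HY : ((-1) ^+ k.+1 * a2) *: Fop a2 h2 P`_k.+1 = 0.
  move: HH; move: (((-1) ^+ k.+1 * a2) *: Fop a2 h2 P`_k.+1) => Y.
  move: ((-1) ^+ k.+1 *: Gop a2 h2 P`_k.+1) (a1 *: B0) => Z W HH.
  by rewrite -HH /=; ring.
move: HY => /eqP.
rewrite scaler_eq0 mulf_eq0 signr_eq0 (negbTE Ha2) /= => /eqP /Fop_inj.
move=> /(_ Hxi2) HP.
have : P != 0 by rewrite -size_poly_eq0 Hsz.
rewrite -lead_coef_eq0 lead_coefE Hsz /= HP eqxx //.
Qed.

End Work9.

From mathcomp Require Import ring zify.
Set Implicit Arguments. Unset Strict Implicit. Unset Printing Implicit Defensive.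

Section Work10.
Variable R : realType.
Local Notation C := (R[i]).
Local Notation V := {poly {poly C}}.

Lemma hom_rel (l a1 a2 : C) h1 h2 (th : V -> V) :
  l != 0 -> Clinear th ->
  (forall (n : nat) v, th (dact l a1 h1 n v) = dact l a2 h2 n (th v)) ->
  (forall f, (size (th f%:P) <= 1)%N) ->
  forall f, th (Gop a1 h1 f)%:P = (Gop a2 h2 (th f%:P)`_0)%:P /\
            PP a1 * th (Fop a1 h1 f)%:P = (a2 *: Fop a2 h2 (th f%:P)`_0)%:P.
Proof.
move=> Hl Hth Hh Hs f.
set g := (th f%:P)`_0.
have Hg : th f%:P = g%:P := size1_polyC (Hs f).
have HX : forall v, th ('X * v) = 'X * th v.
  by move=> v; have := Hh 0%N v; rewrite !dact0m'.
set U := th (Gop a1 h1 f)%:P; set W := PP a1 * th (Fop a1 h1 f)%:P.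
set U' := ((Gop a2 h2 g)%:P : V); set W' := ((a2 *: Fop a2 h2 g)%:P : V).
have E : forall n : nat, PP n%:R * U - PP (n%:R ^+ 2) * W = PP n%:R * U' - PP (n%:R ^+ 2) * W'.
  move=> n.
  have L : th (dact l a1 h1 n f%:P) = PP (l ^+ n) * ('X * g%:P + (PP n%:R * U - PP (n%:R ^+ 2) * W)).
    rewrite dactCn -/(PP _) (CLZ Hth) (CLB Hth) (CLD Hth) HX Hg 2!cPP 2!(CLZ Hth).
    by rewrite /W /U PPM; congr (_ * _); ring.
  have R' : dact l a2 h2 n g%:P = PP (l ^+ n) * ('X * g%:P + (PP n%:R * U' - PP (n%:R ^+ 2) * W')).
    rewrite dactCn -/(PP _) /U' /W' 2!cPP PPM cPP.
    by congr (_ * _); ring.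
  have := Hh n f%:P; rewrite L Hg R' => /mulfI => /(_ _) /addrI; apply.
  by rewrite PP_eq0 expf_neq0.
have E1 := E 1%N; have E2 := E 2%N.
have HW : W = W'.
  have key : PP 2%:R * (W' - W) = (PP 2%:R * U - PP (2%:R ^+ 2) * W - (PP 2%:R * U' - PP (2%:R ^+ 2) * W'))
       - PP 2%:R * (PP 1%:R * U - PP (1%:R ^+ 2) * W - (PP 1%:R * U' - PP (1%:R ^+ 2) * W')).
    rewrite /PP; ring.
  rewrite E1 E2 !subrr mulr0 subrr in key.
  move/eqP: key; rewrite mulf_eq0 PP_eq0 pnatr_eq0 /= subr_eq0 => /eqP.
  by move=> ->.
split => //.
move: E1; rewrite HW /PP !polyC1 => /(congr1 (fun w => w + (1%:R ^+ 2)%:P%:P * W')).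
by rewrite !subrK !mul1r.
Qed.

End Work10.

From mathcomp Require Import ring zify.
Set Implicit Arguments. Unset Strict Implicit. Unset Printing Implicit Defensive.

Section Work11.
Variable R : realType.
Local Notation C := (R[i]).
Local Notation V := {poly {poly C}}.

Lemma Fop_one (a xi eta : C) : Fop a (xi *: 'X + eta%:P) 1 = xi *: 1.
Proof. by rewrite Fop_lin -polyC1 derivC subr0. Qed.

Lemma partA (l1 a1 xi1 eta1 l2 a2 xi2 eta2 : C) :
  l1 != 0 -> l2 != 0 -> a2 != 0 -> xi2 != 0 ->
  Omega_isomorphic l1 a1 (xi1 *: 'X + eta1%:P) l2 a2 (xi2 *: 'X + eta2%:P) ->
  l1 = l2 /\ a1 * xi1 = a2 * xi2.
Proof.
move=> Hl1 Hl2 Ha2 Hxi2 [psi [Hlin Hbij Hcomm]].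
set h1 := xi1 *: 'X + eta1%:P; set h2 := xi2 *: 'X + eta2%:P.
have Hinj := bij_inj Hbij.
set P := psi (1 : {poly C})%:P.
have HP0 : P != 0.
  apply/eqP => HP; have : P = psi 0 by rewrite (CL0 Hlin) HP.
  by rewrite /P => /Hinj/eqP; rewrite polyC_eq0 oner_eq0.
have HX : forall v, psi ('X * v) = 'X * psi v.
  by move=> v; have := Hcomm 0 v; rewrite !dact0m.
set k := (size P).-1.
have Hsz : size P = k.+1 by rewrite prednK // size_poly_gt0.
have Hpk : P`_k != 0 by rewrite -lead_coef_eq0 lead_coefE Hsz /= in HP0.
set W := (psi (Gop a1 h1 1)%:P)`_k.+1.
have Eqn : forall n : nat,
    (l1 ^+ n)%:P * (P`_k + (n%:R : C)%:P * W) = (l2 ^+ n)%:P * P`_k.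
  move=> n; have := congr1 (fun v : V => v`_k.+1) (Hcomm n (1 : {poly C})%:P).
  rewrite dact_top // -exprnP dactCn -/(PP _) (CLZ Hlin) coefCM (CLB Hlin) (CLD Hlin) HX.
  rewrite 2!cPP 2!(CLZ Hlin) Fop_one cPP (CLZ Hlin) -/P -/W.
  have HPk1 : P`_k.+1 = 0 by rewrite nth_default // Hsz.
  rewrite coefB coefD coefXM /= !coefCM HPk1.
  by rewrite !mulr0 subr0.
have E1 := Eqn 1%N; have E2 := Eqn 2%N.
have Hl : l1 = l2.
  have key : ((l1 - l2) ^+ 2)%:P * P`_k =
     (2%:R * l1)%:P * ((l1 ^+ 1)%:P * (P`_k + ((1%:R : C))%:P * W) - (l2 ^+ 1)%:P * P`_k)
     - ((l1 ^+ 2)%:P * (P`_k + ((2%:R : C))%:P * W) - (l2 ^+ 2)%:P * P`_k).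
    ring.
  rewrite E1 E2 !subrr mulr0 subrr in key.
  move/eqP: key; rewrite mulf_eq0 (negbTE Hpk) orbF polyC_eq0 expf_eq0 /= subr_eq0.
  by move/eqP.
split => //.
subst l2.
have Hh : forall (n : nat) v, psi (dact l1 a1 h1 n v) = dact l1 a2 h2 n (psi v).
  by move=> n v; apply: Hcomm.
have Hs := hom_sconst Hl1 Ha2 Hxi2 Hlin Hh.
have [_ HF] := hom_rel Hl1 Hlin Hh Hs 1.
set g := (psi 1%:P)`_0 in HF.
have Hg : psi 1%:P = g%:P := size1_polyC (Hs 1).
move: HF; rewrite Fop_one (cPP xi1 1) (CLZ Hlin) Hg mulrA -PPM -cPP => /polyC_inj.
rewrite Fop_lin => Hgg.
have Hg0 : g != 0 by apply: contraNneq HP0; rewrite /P Hg => ->; rewrite polyC0.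
have := congr1 (fun q : {poly C} => q`_(size g).-1) Hgg.
rewrite !coefZ coefB coefZ coef_deriv (nth_default _ (n := (size g).-1.+1)); last first.
  by rewrite prednK // size_poly_gt0.
rewrite mul0rn subr0 mulrA -lead_coefE => /mulIf; apply.
by rewrite lead_coef_eq0.
Qed.

End Work11.

From mathcomp Require Import ring zify.
Set Implicit Arguments. Unset Strict Implicit. Unset Printing Implicit Defensive.

Section Work12.
Variable R : realType.
Local Notation C := (R[i]).
Local Notation V := {poly {poly C}}.

Lemma phi0_inv (l a1 xi1 eta1 a2 xi2 eta2 : C) :
  l != 0 -> xi1 != 0 -> xi2 != 0 -> a1 * xi1 = a2 * xi2 ->
  forall v, phi0 (eta1 - eta2) xi2 eta2 (xi1 *: 'X + eta1%:P)
              (phi0 (eta2 - eta1) xi1 eta1 (xi2 *: 'X + eta2%:P) v) = v.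
Proof.
move=> Hl Hxi1 Hxi2 Hb.
set p1 := phi0 (eta2 - eta1) xi1 eta1 (xi2 *: 'X + eta2%:P).
set p2 := phi0 (eta1 - eta2) xi2 eta2 (xi1 *: 'X + eta1%:P).
have Hb' : a2 * xi2 = a1 * xi1 by [].
have Hth := Clinear_comb 1 (Clinear_comp (phi0_Clinear (eta1 - eta2) xi2 eta2 (xi1 *: 'X + eta1%:P))
                                         (phi0_Clinear (eta2 - eta1) xi1 eta1 (xi2 *: 'X + eta2%:P)))
                           (fun a v w => erefl (a%:P%:P * v + w)).
have Hc : forall m v, p2 (p1 (dact l a1 (xi1 *: 'X + eta1%:P) m v))
                    = dact l a1 (xi1 *: 'X + eta1%:P) m (p2 (p1 v)).
  by move=> m v; rewrite /p1 /p2 (phi0_hom l eta1 eta2 Hxi1 Hb) (phi0_hom l eta2 eta1 Hxi2 Hb').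
have H := @hom_zero R l a1 xi1 eta1 l a1 (xi1 *: 'X + eta1%:P) _ Hxi1 Hl Hth.
move=> v; apply/eqP; rewrite -subr_eq0; apply/eqP.
have -> : p2 (p1 v) - v = p2 (p1 v) - PP 1 * v by rewrite /PP !polyC1 mul1r.
apply: H.
- by move=> w /=; have := Hc 0 w; rewrite /p1 /p2 => ->; rewrite dactB dactZ.
- by move=> w /=; have := Hc 1 w; rewrite /p1 /p2 => ->; rewrite dactB dactZ.
by rewrite /p1 /p2 !phi0_one // /PP !polyC1 mul1r subrr.
Qed.

Lemma phi0_bij (l a1 xi1 eta1 a2 xi2 eta2 : C) :
  l != 0 -> xi1 != 0 -> xi2 != 0 -> a1 * xi1 = a2 * xi2 ->
  bijective (phi0 (eta2 - eta1) xi1 eta1 (xi2 *: 'X + eta2%:P)).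
Proof.
move=> Hl Hxi1 Hxi2 Hb.
exists (phi0 (eta1 - eta2) xi2 eta2 (xi1 *: 'X + eta1%:P)).
  exact: (phi0_inv eta1 eta2 Hl Hxi1 Hxi2 Hb).
have Hb' : a2 * xi2 = a1 * xi1 by [].
exact: (phi0_inv eta2 eta1 Hl Hxi2 Hxi1 Hb').
Qed.

End Work12.

From mathcomp Require Import ring zify.
Set Implicit Arguments. Unset Strict Implicit. Unset Printing Implicit Defensive.

Section Work13.
Variable R : realType.
Local Notation C := (R[i]).
Local Notation V := {poly {poly C}}.

Lemma PP0 : PP (0 : C) = 0.
Proof. by rewrite /PP polyC0. Qed.

Lemma partC (l a1 xi1 eta1 a2 xi2 eta2 : C) (psi : V -> V) :
  l != 0 -> a2 != 0 -> xi1 != 0 -> xi2 != 0 -> a1 * xi1 = a2 * xi2 ->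
  Vir_iso l a1 (xi1 *: 'X + eta1%:P) l a2 (xi2 *: 'X + eta2%:P) psi ->
  exists c : C, c != 0 /\
    forall v, psi v = PP c * phi0 (eta2 - eta1) xi1 eta1 (xi2 *: 'X + eta2%:P) v.
Proof.
move=> Hl Ha2 Hxi1 Hxi2 Hb [Hlin Hbij Hcomm].
set h1 := xi1 *: 'X + eta1%:P; set h2 := xi2 *: 'X + eta2%:P.
have Hinj := bij_inj Hbij.
have Hh : forall (n : nat) v, psi (dact l a1 h1 n v) = dact l a2 h2 n (psi v).
  by move=> n v; apply: Hcomm.
have Hs := hom_sconst Hl Ha2 Hxi2 Hlin Hh.
have [_ HF] := hom_rel Hl Hlin Hh Hs 1.
set g := (psi 1%:P)`_0 in HF.
have Hg : psi 1%:P = g%:P := size1_polyC (Hs 1).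
move: HF; rewrite Fop_one (cPP xi1 1) (CLZ Hlin) Hg mulrA -PPM -cPP => /polyC_inj.
rewrite Fop_lin scalerBr scalerA -Hb => /eqP; rewrite -subr_eq0 opprB addrC subrK.
rewrite scaler_eq0 (negbTE Ha2) /= => /eqP Hd.
have Hsg : (size g <= 1)%N.
  case Hsz : (size g) => [|[|s]] //.
  have : g^`()`_s = 0 by rewrite Hd coef0.
  rewrite coef_deriv => /eqP; rewrite mulrn_eq0 /= => Hgs.
  have : g != 0 by rewrite -size_poly_eq0 Hsz.
  by rewrite -lead_coef_eq0 lead_coefE Hsz /= (eqP Hgs) eqxx.
set c := g`_0.
have Hpsi1 : psi 1 = PP c.
  by have := Hg; rewrite polyC1 (size1_polyC Hsg).
have Hc : c != 0.
  apply/eqP => Hc0.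
  have : psi 1 = psi 0 := etrans Hpsi1 (etrans (congr1 (@PP R) Hc0) (etrans PP0 (esym (CL0 Hlin)))).
  by move/Hinj/eqP; rewrite oner_eq0.
exists c; split => //.
set ph := phi0 (eta2 - eta1) xi1 eta1 h2.
have Hth := Clinear_comb c Hlin (phi0_Clinear (eta2 - eta1) xi1 eta1 h2).
have H := @hom_zero R l a1 xi1 eta1 l a2 h2 _ Hxi1 Hl Hth.
move=> v; apply/eqP; rewrite -subr_eq0; apply/eqP; apply: H.
- move=> w /=; rewrite Hcomm (phi0_hom l eta1 eta2 Hxi1 Hb).
  by rewrite dactB dactZ.
- move=> w /=; rewrite Hcomm (phi0_hom l eta1 eta2 Hxi1 Hb).
  by rewrite dactB dactZ.
by rewrite /= Hpsi1 phi0_one // mulr1 subrr.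
Qed.

End Work13.

Theorem corollary3p5 (R : realType)
  (l1 a1 xi1 eta1 l2 a2 xi2 eta2 : R[i]) :
  l1 != 0 -> l2 != 0 -> a1 != 0 -> a2 != 0 -> xi1 != 0 -> xi2 != 0 ->
  let h1 := xi1 *: 'X + eta1%:P in
  let h2 := xi2 *: 'X + eta2%:P in
  (Omega_isomorphic l1 a1 h1 l2 a2 h2 <-> l1 = l2 /\ a1 * xi1 = a2 * xi2) /\
  (l1 = l2 /\ a1 * xi1 = a2 * xi2 ->
     (exists phi : {poly {poly R[i]}} -> {poly {poly R[i]}},
        Clinear phi /\ phi_spec (eta2 - eta1) h1 h2 phi) /\
     forall phi : {poly {poly R[i]}} -> {poly {poly R[i]}},
       Clinear phi -> phi_spec (eta2 - eta1) h1 h2 phi ->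
       forall psi : {poly {poly R[i]}} -> {poly {poly R[i]}},
         Vir_iso l1 a1 h1 l2 a2 h2 psi <->
         exists c : R[i], c != 0 /\ forall v, psi v = c%:P%:P * phi v).
Proof.
move=> Hl1 Hl2 Ha1 Ha2 Hxi1 Hxi2 h1 h2.
set ph := phi0 (eta2 - eta1) xi1 eta1 h2.
have Hphb : l1 = l2 -> a1 * xi1 = a2 * xi2 -> Vir_iso l1 a1 h1 l2 a2 h2 ph.
  move=> El Eb; subst l2; split.
  - exact: phi0_Clinear.
  - exact: (phi0_bij eta1 eta2 Hl1 Hxi1 Hxi2 Eb).
  - by move=> m v; rewrite /ph (phi0_hom l1 eta1 eta2 Hxi1 Eb).
split.
  split; first exact: partA.
  by move=> [El Eb]; exists ph; apply: Hphb.
move=> [El Eb]; split.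
  exists ph; split; first exact: phi0_Clinear.
  exact: phi0_spec.
move=> phi Hphi Hspec psi.
have Heq := spec_unique Hxi1 Hphi Hspec.
split.
  subst l2 => Hpsi.
  have [c [Hc Hpc]] := partC Hl1 Ha2 Hxi1 Hxi2 Eb Hpsi.
  by exists c; split => // v; rewrite Hpc Heq.
move=> [c [Hc Hpsi]].
have [Hlin Hbij Hhom] := Hphb El Eb.
split.
- move=> a v w; rewrite !Hpsi Hphi -/(PP c) -/(PP a) !Heq.
  by rewrite mulrDr mulrA (mulrC (PP c)) -mulrA.
- have Hb' : bijective phi by apply: (eq_bij Hbij) => v; rewrite Heq.
  case: Hb' => phinv H1 H2.
  exists (fun v => phinv (PP c^-1 * v)).
    by move=> v; rewrite Hpsi -/(PP c) mulrA -PPM mulVf // /PP !polyC1 mul1r H1.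
  by move=> v; rewrite Hpsi H2 -/(PP c) mulrA -PPM mulfV // /PP !polyC1 mul1r.
- move=> m v; rewrite !Hpsi !Heq -/(PP c) -/ph Hhom.
  by rewrite dactZ.
Qed.
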